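(* The sequence $0\to M\to\mathbb{Z}(Q)\xrightarrow{\pi_1}\operatorname{Wt}(Q)\to0$ is exact, where $\pi_2$ restricts to an isomorphism from $\ker(\pi_1)$ onto the image of $M$ in $\mathbb{Z}^d$, and there is a commutative diagram of abelian groups \[ \begin{array}{ccccccccc}0&\to&M&\to&\mathbb{Z}(Q)&\xrightarrow{\pi_1}&\operatorname{Wt}(Q)&\to&0\\ &&\|&&\downarrow{\scriptstyle\pi_2}&&\downarrow{\scriptstyle\nu}&&\\ 0&\to&M&\to&\mathbb{Z}^d&\xrightarrow{\deg}&\operatorname{Cl}(X)&\to&0\end{array} \] with exact rows. Moreover $\pi_2$ identifies the subsemigroup $\mathbb{N}(Q)\cap\ker(\pi_1)$ with $\sigma^\vee\cap M=\mathbb{N}^d\cap\ker(\deg)$. In particular, the rank of $\mathbb{Z}(Q)$ is $n+r$.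
   Context: Let $\mathbb{k}$ be an algebraically closed field and $X=\operatorname{Spec}R$ a normal affine toric variety of dimension $n$ with a torus-fixed point, $R=\mathbb{k}[\sigma^\vee\cap M]$, $\sigma\subset N\otimes\mathbb{R}$ strongly convex rational polyhedral, $N=M^\vee$. Let $\sigma(1)$ be the rays, $d=|\sigma(1)|$, $v_\rho$ primitive generators, $D_\rho$ toric prime divisors, torus-invariant divisors identified with $\mathbb{Z}^d$; exact sequence $0\to M\to\mathbb{Z}^d\xrightarrow{\deg}\operatorname{Cl}(X)\to0$, $u\mapsto\sum_\rho\langle u,v_\rho\rangle D_\rho$, $\deg D=[\mathcal{O}_X(D)]$. Cox ring $\mathbb{k}[x_\rho]$. Let $\mathscr{E}=(E_0=\mathcal{O}_X,E_1,\dots,E_r)$ be pairwise distinct rank one reflexive sheaves, $E_i=\mathcal{O}_X(D_i')$, and $Q$ its quiver of sections: vertices $0,\dots,r$; an arrow $a:i\to j$ with label $\operatorname{div}(a)\in\mathbb{N}^d$ for each irreducible $T_M$-invariant section $x^{\operatorname{div}(a)}$ of $\operatorname{Hom}(E_i,E_j)\cong H^0(\mathcal{O}_X(D_j'-D_i'))$ (irreducible: not in the image of multiplication through any $E_k$, $k\neq i,j$). $\operatorname{Wt}(Q)=\{\theta\in\mathbb{Z}^{Q_0}:\sum\theta_i=0\}$; $\pi:\mathbb{Z}^{Q_1}\to\operatorname{Wt}(Q)\oplus\mathbb{Z}^d$, $\chi_a\mapsto(\chi_{\mathsf{h}(a)}-\chi_{\mathsf{t}(a)},\operatorname{div}(a))$;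 $\mathbb{Z}(Q)=\pi(\mathbb{Z}^{Q_1})$, $\mathbb{N}(Q)=\pi(\mathbb{N}^{Q_1})$; $\pi_1,\pi_2$ the projections of $\mathbb{Z}(Q)$ to $\operatorname{Wt}(Q)$ and $\mathbb{Z}^d$; $\nu:\operatorname{Wt}(Q)\to\operatorname{Cl}(X)$, $\nu(\sum\theta_i\chi_i)=\sum\theta_i[E_i]$. *)

(* Defs.v *)
From HB Require Import structures.
From mathcomp Require Import all_boot all_order all_algebra.
Set Implicit Arguments. Unset Strict Implicit. Unset Printing Implicit Defensive.
Import Order.TTheory GRing.Theory Num.Theory.
Local Open Scope ring_scope.

(* Fan data: N = M^vee = Z^n, the rays v_rho are the columns of V : 'M_(n,d);
   <u, v_rho> = (u *m V) 0 rho for u in M = 'rV[int]_n. *)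

(* sigma = cone(v_rho) is strongly convex: no nontrivial nonnegative
   combination of the v_rho vanishes (coefficients may be taken integral). *)
Definition strongly_convex (n d : nat) (V : 'M[int]_(n, d)) : Prop :=
  forall lam : 'cV[int]_d, (forall rho, 0 <= lam rho 0) -> V *m lam = 0 -> lam = 0.

(* torus-fixed point <=> sigma spans N_R *)
Definition full_dim (n d : nat) (V : 'M[int]_(n, d)) : Prop :=
  \rank (map_mx (fun z : int => z%:~R : rat) V) = n.

Definition primitive_cols (n d : nat) (V : 'M[int]_(n, d)) : Prop :=
  forall (rho : 'I_d) (k : int) (w : 'cV[int]_n), col rho V = k *: w -> k = 1 \/ k = -1.

Definition distinct_cols (n d : nat) (V : 'M[int]_(n, d)) : Prop :=
  injective (fun rho : 'I_d => col rho V).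

Definition extremal_cols (n d : nat) (V : 'M[int]_(n, d)) : Prop :=
  forall (rho : 'I_d) (k : int) (lam : 'cV[int]_d),
    0 < k -> (forall i, 0 <= lam i 0) -> lam rho 0 = 0 -> k *: col rho V <> V *m lam.

Definition toric_fan_data (n d : nat) (V : 'M[int]_(n, d)) : Prop :=
  [/\ strongly_convex V, full_dim V, primitive_cols V, distinct_cols V & extremal_cols V].

(* The T_M-invariant sections of Hom(E_i,E_j) = H^0(O_X(D'_j - D'_i)) are the
   x^u, u in M, with <u,v_rho> + (D'_j - D'_i)_rho >= 0; its label is the
   exponent vector div = div(chi^u) + D'_j - D'_i in N^d. *)
Definition is_section (n d r : nat) (V : 'M[int]_(n, d)) (D' : 'I_r.+1 -> 'rV[int]_d)
    (i j : 'I_r.+1) (dv : 'rV[nat]_d) : Prop :=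
  exists u : 'rV[int]_n, map_mx Posz dv = u *m V + (D' j - D' i).

(* irreducible: not a product of sections i -> k -> j with k <> i, j *)
Definition is_arrow (n d r : nat) (V : 'M[int]_(n, d)) (D' : 'I_r.+1 -> 'rV[int]_d)
    (a : 'I_r.+1 * 'I_r.+1 * 'rV[nat]_d) : Prop :=
  let: (i, j, dv) := a in
  is_section V D' i j dv /\
  ~ (exists (k : 'I_r.+1) (dv1 dv2 : 'rV[nat]_d),
        [/\ k != i, k != j, is_section V D' i k dv1, is_section V D' k j dv2 &
            forall rho, dv ord0 rho = (dv1 ord0 rho + dv2 ord0 rho)%N]).

(* The arrows of the quiver of sections Q are the triples
   (tail, head, label) satisfying is_arrow. *)
Definition chi (r : nat) (i : 'I_r.+1) : 'rV[int]_r.+1 := delta_mx 0 i.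

Definition pi_arrow (d r : nat) (a : 'I_r.+1 * 'I_r.+1 * 'rV[nat]_d)
  : ('rV[int]_r.+1 * 'rV[int]_d)%type :=
  (chi a.1.2 - chi a.1.1, map_mx Posz a.2).

Definition ZQ (n d r : nat) (V : 'M[int]_(n, d)) (D' : 'I_r.+1 -> 'rV[int]_d)
    (z : ('rV[int]_r.+1 * 'rV[int]_d)%type) : Prop :=
  exists s : seq (int * ('I_r.+1 * 'I_r.+1 * 'rV[nat]_d)),
    (forall p, p \in s -> is_arrow V D' p.2) /\
    z = \sum_(p <- s) (pi_arrow p.2 *~ p.1).

Definition NQ (n d r : nat) (V : 'M[int]_(n, d)) (D' : 'I_r.+1 -> 'rV[int]_d)
    (z : ('rV[int]_r.+1 * 'rV[int]_d)%type) : Prop :=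
  exists s : seq ('I_r.+1 * 'I_r.+1 * 'rV[nat]_d),
    (forall a, a \in s -> is_arrow V D' a) /\
    z = \sum_(a <- s) pi_arrow a.

Definition Wt (r : nat) (th : 'rV[int]_r.+1) : Prop := \sum_i th 0 i = 0.

Definition nu (d r : nat) (Cl : zmodType) (deg : 'rV[int]_d -> Cl)
    (D' : 'I_r.+1 -> 'rV[int]_d) (th : 'rV[int]_r.+1) : Cl :=
  \sum_i deg (D' i) *~ th 0 i.

Definition zindep (T : zmodType) (m : nat) (f : 'I_m -> T) : Prop :=
  forall c : 'I_m -> int, \sum_k f k *~ c k = 0 -> forall k, c k = 0.

Definition has_rank (T : zmodType) (P : T -> Prop) (m : nat) : Prop :=
  (exists f : 'I_m -> T, (forall k, P (f k)) /\ zindep f) /\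
  (forall f : 'I_m.+1 -> T, (forall k, P (f k)) -> ~ zindep f).

(* Main.v *)
Require Import Defs.
From HB Require Import structures.
From mathcomp Require Import all_boot all_order all_algebra.
From Stdlib Require Classical_Prop.
From mathcomp Require Import ring lra.
Set Implicit Arguments. Unset Strict Implicit. Unset Printing Implicit Defensive.
Import Order.TTheory GRing.Theory Num.Theory.
Local Open Scope ring_scope.

Definition dot n (u w : 'rV[rat]_n) : rat := \sum_j u 0 j * w 0 j.

Lemma dotC n (u w : 'rV[rat]_n) : dot u w = dot w u.
Proof. by apply: eq_bigr => j _; rewrite mulrC. Qed.

Lemma dotDl n (u v w : 'rV[rat]_n) : dot (u + v) w = dot u w + dot v w.
Proof. by rewrite /dot -big_split; apply: eq_bigr => j _; rewrite mxE mulrDl. Qed.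

Lemma dotZl n a (u w : 'rV[rat]_n) : dot (a *: u) w = a * dot u w.
Proof. by rewrite /dot mulr_sumr; apply: eq_bigr => j _; rewrite mxE mulrA. Qed.

Lemma dotNl n (u w : 'rV[rat]_n) : dot (- u) w = - dot u w.
Proof. by rewrite -scaleN1r dotZl mulN1r. Qed.

Lemma dotBl n (u v w : 'rV[rat]_n) : dot (u - v) w = dot u w - dot v w.
Proof. by rewrite dotDl dotNl. Qed.

Lemma dot0l n (w : 'rV[rat]_n) : dot 0 w = 0.
Proof. by rewrite /dot big1 // => j _; rewrite mxE mul0r. Qed.

Lemma dot_suml n k (F : 'I_k -> 'rV[rat]_n) w :
  dot (\sum_i F i) w = \sum_i dot (F i) w.
Proof.
elim/big_rec2: _ => [|i x y _ <-]; first by rewrite dot0l.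
by rewrite dotDl.
Qed.

Lemma dot_self_gt0 n (u : 'rV[rat]_n) : u != 0 -> 0 < dot u u.
Proof.
move=> un0.
have [j uj] : exists j, u 0 j != 0.
  apply/existsP; apply: contraR un0 => /existsPn H; apply/eqP/matrixP => i j.
  by rewrite (ord1 i) mxE; apply/eqP; have := H j; rewrite negbK.
rewrite /dot (bigD1 j) //=; apply: (@lt_le_trans _ _ (u 0 j * u 0 j)).
  by rewrite -expr2 exprn_even_gt0 //= uj orbT.
rewrite lerDl sumr_ge0 // => i _; rewrite -expr2; exact: sqr_ge0.
Qed.

Lemma sum_pos k (F : 'I_k -> rat) i0 :
  (forall i, 0 <= F i) -> 0 < F i0 -> 0 < \sum_i F i.
Proof.
move=> H H0; rewrite (bigD1 i0) //=; apply: (lt_le_trans H0).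
by rewrite lerDl sumr_ge0.
Qed.

Lemma term_le_sum k (F : 'I_k -> rat) i0 :
  (forall i, 0 <= F i) -> F i0 <= \sum_i F i.
Proof.
move=> H; rewrite (bigD1 i0) //=.
by rewrite lerDl sumr_ge0.
Qed.
Lemma gordan n k (f : 'I_k -> 'rV[rat]_n) :
 (exists u, forall i, 0 < dot u (f i)) \/
 (exists lam : 'I_k -> rat, (forall i, 0 <= lam i) /\ (exists i, 0 < lam i) /\
     \sum_i lam i *: f i = 0).
Proof.
elim: k f => [|k IH] f.
  by left; exists 0; case.
set v := f ord0; set g := fun i => f (lift ord0 i).
have sumE : forall lam : 'I_k.+1 -> rat, \sum_i lam i *: f i =
   lam ord0 *: v + \sum_i lam (lift ord0 i) *: g i by move=> lam; rewrite big_ord_recl.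
case: (IH g) => [[u Hu]|[lam [H0 [[i0 Hi0] Hs]]]]; last first.
  right; exists (fun i => if unlift ord0 i is Some j then lam j else 0).
  split; first by move=> i; case: (unlift _ _).
  split; first by exists (lift ord0 i0); rewrite liftK.
  by rewrite sumE unlift_none scale0r add0r -[in RHS]Hs; apply: eq_bigr => i _; rewrite liftK.
case: (ltrP 0 (dot u v)) => Huv.
  left; exists u => i; case: (unliftP ord0 i) => [j ->|->]; [exact: Hu | done].
case: (eqVneq v 0) => [v0|vn0].
  right; exists (fun i => if i == ord0 then 1 else 0).
  split; first by move=> i; case: (_ == _).
  split; first by exists ord0; rewrite eqxx.
  rewrite sumE eqxx v0 scaler0 add0r big1 // => i _.
  by have := neq_lift ord0 i; rewrite eq_sym => /negbTE ->; rewrite scale0r.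
have vv : 0 < dot v v by exact: dot_self_gt0.
pose P := fun w => w - (dot w v / dot v v) *: v.
have dotPv : forall w, dot (P w) v = 0.
  move=> w; rewrite dotBl dotZl -mulrA mulVf ?mulr1 ?subrr //.
  by rewrite gt_eqF.
have dotP : forall w w', dot (P w) w' = dot w (P w').
  move=> w w'; rewrite dotBl dotZl [RHS]dotC dotBl dotZl (dotC w' w) (dotC v w').
  rewrite (dotC v w); ring.
case: (IH (fun i => P (g i))) => [[u' Hu']|[lam [H0 [[i0 Hi0] Hs]]]].
  left.
  pose a := fun i => dot (P u') (g i).
  have apos : forall i, 0 < a i by move=> i; rewrite /a dotP.
  pose K := 1 + \sum_i `|dot v (g i)| / a i.
  exists (K *: P u' + v) => i; case: (unliftP ord0 i) => [j ->|->]; last first.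
    by rewrite dotDl dotZl dotPv mulr0 add0r.
  rewrite dotDl dotZl -/(g j) -/(a j).
  have aj := apos j.
  have Ht : `|dot v (g j)| / a j <= \sum_i `|dot v (g i)| / a i.
    apply: (term_le_sum (F := fun i => `|dot v (g i)| / a i)) => i1.
    by rewrite divr_ge0 // ltW.
  have : (1 + `|dot v (g j)| / a j) * a j <= K * a j.
    by rewrite ler_pM2r // lerD2l.
  rewrite mulrDl mul1r divfK ?gt_eqF // => HK.
  have h2 := ler_norm (- dot v (g j)); rewrite normrN in h2.
  move: (dot v (g j)) (`|dot v (g j)|) HK h2 => b c HK h2.
  lra.
right.
pose C := \sum_i lam i * (dot (g i) v / dot v v).
have HsC : \sum_i lam i *: g i = C *: v.
  apply/eqP; rewrite -subr_eq0 -[X in _ == X]Hs /P.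
  under [X in _ == X]eq_bigr => i _ do rewrite scalerBr scalerA.
  by rewrite sumrB /C scaler_suml.
case: (lerP C 0) => HC.
  exists (fun i => if unlift ord0 i is Some j then lam j else - C).
  split; first by move=> i; case: (unlift _ _) => // ; rewrite oppr_ge0.
  split; first by exists (lift ord0 i0); rewrite liftK.
  rewrite sumE unlift_none.
  under eq_bigr => i _ do rewrite liftK.
  by rewrite HsC scaleNr addNr.
exfalso.
have : 0 < dot (\sum_i lam i *: g i) u.
  rewrite dot_suml; apply: (sum_pos (i0 := i0)).
    by move=> i; rewrite dotZl dotC mulr_ge0 // ltW.
  by rewrite dotZl dotC mulr_gt0.
rewrite HsC dotZl dotC.
move=> H; have : C * dot u v <= 0 by rewrite pmulr_rle0.
lra.
Qed.

Lemma clear_den k (g : 'I_k -> rat) :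
  exists N : int, 0 < N /\ exists h : 'I_k -> int, forall i, N%:~R * g i = (h i)%:~R.
Proof.
elim: k g => [|k IH] g.
  by exists 1; split => //; exists (fun _ => 0); case.
have [N' [N'p [h' Hh']]] := IH (fun j => g (lift ord0 j)).
set q := g ord0.
exists (N' * denq q); split; first by rewrite mulr_gt0 // denq_gt0.
exists (fun i => if unlift ord0 i is Some j then h' j * denq q else numq q * N').
move=> i; case: (unliftP ord0 i) => [j ->|->].
  by rewrite !intrM -Hh' mulrAC.
by rewrite !intrM numqE -/q; ring.
Qed.

Lemma intr_mulmx_entry n d (u : 'rV[int]_n) (V : 'M[int]_(n, d)) rho :
  ((u *m V) 0 rho)%:~R = \sum_j (u 0 j)%:~R * (V j rho)%:~R :> rat.
Proof. by rewrite mxE rmorph_sum; apply: eq_bigr => j _; rewrite rmorphM. Qed.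

Lemma interior_pt n d (V : 'M[int]_(n, d)) :
  strongly_convex V -> exists u0 : 'rV[int]_n, forall rho, 0 < (u0 *m V) 0 rho.
Proof.
move=> sc.
pose f := fun rho : 'I_d => \row_j ((V j rho)%:~R : rat).
case: (gordan f) => [[u Hu]|[lam [H0 [[r0 Hr0] Hs]]]].
  have [N [Np [h Hh]]] := clear_den (fun j => u 0 j).
  exists (\row_j h j) => rho.
  rewrite -(ltr_int rat) intr_mulmx_entry.
  have -> : \sum_j ((\row_j h j) 0 j)%:~R * (V j rho)%:~R = N%:~R * dot u (f rho) :> rat.
    rewrite /dot mulr_sumr; apply: eq_bigr => j _; rewrite !mxE -Hh mulrA.
    done.
  by rewrite mulr_gt0 // ltr0z.
have [N [Np [h Hh]]] := clear_den lam.
have hge : forall rho, 0 <= h rho.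
  by move=> rho; rewrite -(ler_int rat) -Hh mulr_ge0 // ler0z ltW.
have hr0 : 0 < h r0 by rewrite -(ltr_int rat) -Hh mulr_gt0 // ltr0z.
have := sc (\col_rho h rho).
have : (\col_rho h rho) = 0 -> False.
  by move/matrixP/(_ r0 0); rewrite !mxE => E; move: hr0; rewrite E ltxx.
move=> Hf H; exfalso; apply: Hf; apply: H.
  by move=> rho; rewrite mxE.
apply/matrixP => i k; rewrite (ord1 k) [RHS]mxE; apply: (@intr_inj rat).
rewrite mxE rmorph_sum /= rmorph0.
have E : N%:~R * (\sum_rho lam rho *: f rho) 0 i = 0 by rewrite Hs mxE mulr0.
rewrite -[RHS]E summxE mulr_sumr.
by apply: eq_bigr => rho _; rewrite !mxE intrM -Hh; ring.
Qed.

Lemma mx_mulrn (T : zmodType) m n (A : 'M[T]_(m, n)) i j k : (A *+ k) i j = A i j *+ k.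
Proof. by elim: k => [|k IH]; rewrite ?mulr0n ?mxE // !mulrS mxE IH. Qed.

Lemma mx_mulrz (T : zmodType) m n (A : 'M[T]_(m, n)) i j z : (A *~ z) i j = A i j *~ z.
Proof.
case: z => k; first exact: mx_mulrn.
by rewrite !NegzE !mulrNz mxE mx_mulrn.
Qed.

Lemma mx_sum (T : zmodType) m n k (F : 'I_k -> 'M[T]_(m, n)) i j :
  (\sum_l F l) i j = \sum_l F l i j.
Proof. exact: summxE. Qed.

Lemma fst_mulrz (U W : zmodType) (x : U * W) z : (x *~ z).1 = x.1 *~ z.
Proof.
have H : forall k, (x *+ k).1 = x.1 *+ k.
  by elim=> [|k IH] //; rewrite !mulrS /= IH.
by case: z => k; [exact: H | rewrite !NegzE !mulrNz /= H].
Qed.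

Lemma snd_mulrz (U W : zmodType) (x : U * W) z : (x *~ z).2 = x.2 *~ z.
Proof.
have H : forall k, (x *+ k).2 = x.2 *+ k.
  by elim=> [|k IH] //; rewrite !mulrS /= IH.
by case: z => k; [exact: H | rewrite !NegzE !mulrNz /= H].
Qed.

Lemma fst_sum (U W : zmodType) I (s : seq I) (F : I -> U * W) :
  (\sum_(i <- s) F i).1 = \sum_(i <- s) (F i).1.
Proof. by elim/big_rec2: _ => // i x y _ <-. Qed.

Lemma snd_sum (U W : zmodType) I (s : seq I) (F : I -> U * W) :
  (\sum_(i <- s) F i).2 = \sum_(i <- s) (F i).2.
Proof. by elim/big_rec2: _ => // i x y _ <-. Qed.

Lemma int_dep m (g : 'I_m.+1 -> 'rV[int]_m) :
  exists c : 'I_m.+1 -> int, (exists k, c k != 0) /\ \sum_k g k *~ c k = 0.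
Proof.
pose G : 'M[rat]_(m.+1, m) := \matrix_(k, j) (g k 0 j)%:~R.
have nf : ~~ row_free G by rewrite -row_leq_rank -ltnNge ltnS rank_leq_col.
have Kn0 : kermx G != 0 by rewrite kermx_eq0.
have : [exists k0, exists j0, kermx G k0 j0 != 0].
  apply: contraR Kn0 => /existsPn H; apply/eqP/matrixP => i j.
  by move: (H i) => /existsPn /(_ j); rewrite negbK [RHS]mxE => /eqP.
case/existsP => k0 /existsP [j0 Hk].
pose x := row k0 (kermx G).
have x0 : x *m G = 0 by rewrite /x -row_mul mulmx_ker row0.
have [N [Np [h Hh]]] := clear_den (fun k => x 0 k).
exists h; split.
  exists j0; apply: contraNneq Hk => E.
  have := Hh j0; rewrite E /x mxE => /eqP; rewrite mulf_eq0 intr_eq0 (gt_eqF Np) /=.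
  by move/eqP->.
apply/matrixP => i j; rewrite (ord1 i) mx_sum [RHS]mxE; apply: (@intr_inj rat).
rewrite rmorph_sum rmorph0.
have E : N%:~R * (x *m G) 0 j = 0 by rewrite x0 mxE mulr0.
rewrite -[RHS]E mxE mulr_sumr; apply: eq_bigr => k _.
rewrite mx_mulrz rmorphMz -mulrzr -Hh [G k j]mxE; rewrite mxE; ring.
Qed.

From mathcomp Require Import zify.

Lemma mulmxz n d (u : 'rV[int]_n) (V : 'M[int]_(n, d)) c :
  (u *~ c) *m V = (u *m V) *~ c.
Proof.
apply/matrixP => i j; rewrite mx_mulrz !mxE mulrzz mulr_suml.
by apply: eq_bigr => k _; rewrite mx_mulrz mulrzz; ring.
Qed.

Lemma mulmx_sumz n d k (u : 'I_k -> 'rV[int]_n) (c : 'I_k -> int) (V : 'M[int]_(n, d)) :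
  (\sum_l u l *~ c l) *m V = \sum_l (u l *m V) *~ c l.
Proof.
elim/big_rec2: _ => [|l x y _ <-]; first by rewrite mul0mx.
by rewrite mulmxDl mulmxz.
Qed.

Lemma chi_wsum (T : zmodType) r (F : 'I_r.+1 -> T) (i j : 'I_r.+1) :
  \sum_k F k *~ (chi j - chi i) 0 k = F j - F i.
Proof.
have H : forall l, \sum_k F k *~ (chi l) 0 k = F l.
  move=> l; rewrite (bigD1 l) //= big1 => [|k kl].
    by rewrite mxE !eqxx mulr1z addr0.
  by rewrite mxE (negbTE kl) andbF mulr0z.
rewrite -(H j) -(H i) -sumrB; apply: eq_bigr => k _.
by rewrite mxE [(- chi i) 0 k]mxE mulrzBr.
Qed.

Definition Lmap (d r : nat) (D' : 'I_r.+1 -> 'rV[int]_d)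
  (z : 'rV[int]_r.+1 * 'rV[int]_d) : 'rV[int]_d := z.2 - \sum_i D' i *~ z.1 0 i.

Definition wsum (r : nat) (th : 'rV[int]_r.+1) : int := \sum_i th 0 i.

Lemma LmapD d r D' (x y : 'rV[int]_r.+1 * 'rV[int]_d) :
  Lmap D' (x + y) = Lmap D' x + Lmap D' y.
Proof.
rewrite /Lmap /=.
have -> : \sum_i D' i *~ (x.1 + y.1) 0 i = \sum_i D' i *~ x.1 0 i + \sum_i D' i *~ y.1 0 i.
  by rewrite -big_split; apply: eq_bigr => i _; rewrite mxE mulrzDr.
by rewrite opprD addrACA.
Qed.

Lemma Lmap0 d r D' : Lmap D' (0 : 'rV[int]_r.+1 * 'rV[int]_d) = 0.
Proof. by rewrite /Lmap /= big1 ?subrr // => i _; rewrite mxE mulr0z. Qed.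

Lemma LmapZ d r D' (x : 'rV[int]_r.+1 * 'rV[int]_d) c :
  Lmap D' (x *~ c) = Lmap D' x *~ c.
Proof.
rewrite /Lmap fst_mulrz snd_mulrz mulrzBl mulrz_suml; congr (_ - _).
by apply: eq_bigr => i _; rewrite mx_mulrz mulrzz mulrzA.
Qed.

Lemma Lmap_sum d r D' I (s : seq I) (F : I -> 'rV[int]_r.+1 * 'rV[int]_d) :
  Lmap D' (\sum_(i <- s) F i) = \sum_(i <- s) Lmap D' (F i).
Proof. by elim/big_rec2: _ => [|i x y _ <-]; rewrite ?Lmap0 ?LmapD. Qed.

Lemma wsumD r (x y : 'rV[int]_r.+1) : wsum (x + y) = wsum x + wsum y.
Proof. by rewrite /wsum -big_split; apply: eq_bigr => i _; rewrite mxE. Qed.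

Lemma wsumZ r (x : 'rV[int]_r.+1) c : wsum (x *~ c) = wsum x *~ c.
Proof. by rewrite /wsum mulrz_suml; apply: eq_bigr => i _; rewrite mx_mulrz. Qed.

Lemma wsum0 r : wsum (0 : 'rV[int]_r.+1) = 0.
Proof. by rewrite /wsum big1 // => i _; rewrite mxE. Qed.

Lemma wsum_sum r I (s : seq I) (F : I -> 'rV[int]_r.+1) :
  wsum (\sum_(i <- s) F i) = \sum_(i <- s) wsum (F i).
Proof. by elim/big_rec2: _ => [|i x y _ <-]; rewrite ?wsum0 ?wsumD. Qed.

Lemma wsum_chi r (i j : 'I_r.+1) : wsum (chi j - chi i) = 0.
Proof.
have := chi_wsum (fun _ => (1 : int)) i j; rewrite subrr => <-.
by apply: eq_bigr => k _; rewrite mulrzz mul1r.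
Qed.

Lemma ZQ0 n d r (V : 'M[int]_(n, d)) D' : ZQ V D' (0 : 'rV[int]_r.+1 * 'rV[int]_d).
Proof. by exists [::]; rewrite big_nil. Qed.

Lemma ZQ_add n d r (V : 'M[int]_(n, d)) (D' : 'I_r.+1 -> _) z z' :
  ZQ V D' z -> ZQ V D' z' -> ZQ V D' (z + z').
Proof.
move=> [s [Hs ->]] [s' [Hs' ->]]; exists (s ++ s'); rewrite big_cat; split => //.
by move=> p; rewrite mem_cat => /orP [] ?; [apply: Hs | apply: Hs'].
Qed.

Lemma ZQ_mulz n d r (V : 'M[int]_(n, d)) (D' : 'I_r.+1 -> _) z c :
  ZQ V D' z -> ZQ V D' (z *~ c).
Proof.
move=> [s [Hs ->]]; exists (map (fun p => (p.1 * c, p.2)) s); split.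
  by move=> p /mapP [q qs ->]; exact: (Hs q qs).
rewrite mulrz_suml (big_map (fun p => (p.1 * c, p.2)) xpredT (fun p => pi_arrow p.2 *~ p.1)).
by apply: eq_bigr => p _; rewrite mulrzA.
Qed.

Lemma ZQ_sum n d r (V : 'M[int]_(n, d)) (D' : 'I_r.+1 -> _) k (F : 'I_k -> _) :
  (forall l, ZQ V D' (F l)) -> ZQ V D' (\sum_l F l).
Proof.
move=> H; apply: (big_ind (ZQ V D')); [exact: ZQ0 | exact: ZQ_add | by []].
Qed.

Lemma NQ_ZQ n d r (V : 'M[int]_(n, d)) (D' : 'I_r.+1 -> _) z : NQ V D' z -> ZQ V D' z.
Proof.
move=> [s [Hs ->]]; exists (map (fun a => (1, a)) s); split.
  by move=> p /mapP [q qs ->]; exact: (Hs q qs).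
rewrite (big_map (fun a => (1, a)) xpredT (fun p => pi_arrow p.2 *~ p.1)).
by apply: eq_bigr => p _; rewrite mulr1z.
Qed.

Lemma NQ_add n d r (V : 'M[int]_(n, d)) (D' : 'I_r.+1 -> _) z z' :
  NQ V D' z -> NQ V D' z' -> NQ V D' (z + z').
Proof.
move=> [s [Hs ->]] [s' [Hs' ->]]; exists (s ++ s'); rewrite big_cat; split => //.
by move=> p; rewrite mem_cat => /orP [] ?; [apply: Hs | apply: Hs'].
Qed.

Lemma Lmap_section n d r (V : 'M[int]_(n, d)) (D' : 'I_r.+1 -> _) i j dv :
  is_section V D' i j dv -> exists u, Lmap D' (pi_arrow (i, j, dv)) = u *m V.
Proof.
move=> [u Hu]; exists u; rewrite /Lmap /= chi_wsum Hu.
by rewrite addrK.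
Qed.

Lemma ZQ_inv n d r (V : 'M[int]_(n, d)) (D' : 'I_r.+1 -> _) z :
  ZQ V D' z -> wsum z.1 = 0 /\ exists u, Lmap D' z = u *m V.
Proof.
move=> [s [Hs ->]]; split.
  rewrite fst_sum wsum_sum big1_seq // => p /andP [_ ps].
  by rewrite fst_mulrz wsumZ wsum_chi mul0rz.
elim: s Hs => [|p s IH] Hs.
  by exists 0; rewrite big_nil Lmap0 mul0mx.
have [u' Hu'] : exists u, Lmap D' (\sum_(p <- s) pi_arrow p.2 *~ p.1) = u *m V.
  by apply: IH => q qs; apply: Hs; rewrite inE qs orbT.
have Hp : is_arrow V D' p.2 by apply: Hs; rewrite inE eqxx.
move: Hp; clear Hs IH; case: p => c [[i j] dv] /= [Hsec _].
have [ua Hua] := Lmap_section Hsec.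
exists (ua *~ c + u'); rewrite big_cons LmapD LmapZ /= Hua Hu'.
by rewrite mulmxDl mulmxz.
Qed.

Lemma pos_label n d r (V : 'M[int]_(n, d)) (Cl : zmodType)
    (deg : {additive 'rV[int]_d -> Cl}) (D' : 'I_r.+1 -> 'rV[int]_d) i k dv :
  (forall u, deg (u *m V) = 0) -> injective (fun i => deg (D' i)) ->
  is_section V D' i k dv -> k != i -> (0 < \sum_rho dv ord0 rho)%N.
Proof.
move=> HV Hinj [u Hu] ki; rewrite lt0n; apply: contraNneq ki => /eqP.
rewrite sum_nat_eq0 => /forallP H0.
have : map_mx Posz dv = 0.
  apply/matrixP => a b; rewrite (ord1 a) !mxE; have := H0 b; rewrite implyTb => /eqP ->.
  done.
rewrite Hu => /(congr1 deg); rewrite raddf0 raddfD raddfB HV add0r => /eqP.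
by rewrite subr_eq0 => /eqP /Hinj ->.
Qed.

Lemma section_NQ n d r (V : 'M[int]_(n, d)) (Cl : zmodType)
    (deg : {additive 'rV[int]_d -> Cl}) (D' : 'I_r.+1 -> 'rV[int]_d) :
  (forall u, deg (u *m V) = 0) -> injective (fun i => deg (D' i)) ->
  forall i j dv, is_section V D' i j dv -> NQ V D' (chi j - chi i, map_mx Posz dv).
Proof.
move=> HV Hinj.
suff H : forall N i j (dv : 'rV[nat]_d), (\sum_rho dv ord0 rho < N)%N -> is_section V D' i j dv ->
    NQ V D' (chi j - chi i, map_mx Posz dv).
  by move=> i j dv; apply: H (ltnSn _).
elim=> [|N IH] i j dv Hlt Hsec; first by rewrite ltn0 in Hlt.
case: (Classical_Prop.classic (exists (k : 'I_r.+1) (dv1 dv2 : 'rV[nat]_d),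
        [/\ k != i, k != j, is_section V D' i k dv1, is_section V D' k j dv2 &
            forall rho, dv ord0 rho = (dv1 ord0 rho + dv2 ord0 rho)%N])).
  move=> [k [dv1 [dv2 [ki kj s1 s2 Hsum]]]].
  have p1 := pos_label HV Hinj s1 ki.
  have p2 := pos_label HV Hinj s2 (contra_neq (fun e => esym e) kj).
  have Hs : (\sum_rho dv ord0 rho = \sum_rho dv1 ord0 rho + \sum_rho dv2 ord0 rho)%N.
    by rewrite -big_split; apply: eq_bigr => rho _; exact: Hsum.
  have -> : (chi j - chi i, map_mx Posz dv) =
            (chi k - chi i, map_mx Posz dv1) + (chi j - chi k, map_mx Posz dv2).
    congr pair; first by rewrite [RHS]addrC addrA subrK.
    by apply/matrixP => a b; rewrite (ord1 a) !mxE Hsum.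
  apply: NQ_add; [apply: (IH _ _ _ _ s1) | apply: (IH _ _ _ _ s2)]; rewrite -ltnS; apply: leq_trans Hlt;
    rewrite ltnS Hs; lia.
move=> Hn; exists [:: (i, j, dv)]; split; last by rewrite big_seq1.
by move=> a; rewrite inE => /eqP ->; split.
Qed.

Lemma pos_shift n d (V : 'M[int]_(n, d)) (u0 : 'rV[int]_n) :
  (forall rho, 0 < (u0 *m V) 0 rho) -> forall D : 'rV[int]_d,
  exists w : 'rV[int]_n, (forall rho, 0 <= (w *m V) 0 rho) /\
                         (forall rho, 0 <= (w *m V + D) 0 rho).
Proof.
move=> H D; pose K := \sum_rho `|D 0 rho|.
have K0 : 0 <= K by apply: sumr_ge0.
have HK : forall rho, - D 0 rho <= K.
  move=> rho; apply: (le_trans (ler_norm _)); rewrite normrN /K (bigD1 rho) //=.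
  by rewrite lerDl sumr_ge0.
have E : forall rho, ((u0 *~ K) *m V) 0 rho = (u0 *m V) 0 rho * K.
  by move=> rho; rewrite mulmxz mx_mulrz mulrzz.
exists (u0 *~ K); split => rho.
  rewrite E; have := H rho; have := HK rho.
  by move: ((u0 *m V) 0 rho) (D 0 rho) => a b; nia.
rewrite [(_ + D) _ _]mxE E; have := H rho; have := HK rho.
by move: ((u0 *m V) 0 rho) (D 0 rho) => a b; nia.
Qed.

Lemma NQ_sec n d r (V : 'M[int]_(n, d)) (Cl : zmodType)
    (deg : {additive 'rV[int]_d -> Cl}) (D' : 'I_r.+1 -> 'rV[int]_d) i j (w : 'rV[int]_n) :
  (forall u, deg (u *m V) = 0) -> injective (fun i => deg (D' i)) ->
  (forall rho, 0 <= (w *m V + (D' j - D' i)) 0 rho) ->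
  NQ V D' (chi j - chi i, w *m V + (D' j - D' i)).
Proof.
move=> HV Hinj H.
pose dv : 'rV[nat]_d := \row_rho absz ((w *m V + (D' j - D' i)) 0 rho).
have Edv : map_mx Posz dv = w *m V + (D' j - D' i).
  by apply/matrixP => a b; rewrite (ord1 a) mxE [dv _ _]mxE gez0_abs.
rewrite -Edv; apply: (section_NQ HV Hinj).
by exists w.
Qed.

Lemma NQ_M n d r (V : 'M[int]_(n, d)) (Cl : zmodType)
    (deg : {additive 'rV[int]_d -> Cl}) (D' : 'I_r.+1 -> 'rV[int]_d) (w : 'rV[int]_n) :
  (forall u, deg (u *m V) = 0) -> injective (fun i => deg (D' i)) ->
  (forall rho, 0 <= (w *m V) 0 rho) -> NQ V D' (0, w *m V).
Proof.
move=> HV Hinj H.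
have := @NQ_sec n d r V Cl deg D' 0 0 w HV Hinj.
by rewrite !subrr addr0; apply.
Qed.

Lemma ZQ_sub n d r (V : 'M[int]_(n, d)) (D' : 'I_r.+1 -> 'rV[int]_d) z z' :
  ZQ V D' z -> ZQ V D' z' -> ZQ V D' (z - z').
Proof. by move=> H H'; rewrite -mulrN1z; apply: ZQ_add => //; apply: ZQ_mulz. Qed.

Lemma mulV_inj n d (V : 'M[int]_(n, d)) : full_dim V -> forall u : 'rV[int]_n, u *m V = 0 -> u = 0.
Proof.
move=> fd u Hu.
pose Vq := map_mx (fun z : int => z%:~R : rat) V.
have rf : row_free Vq by rewrite /row_free fd.
have : map_mx (fun z : int => z%:~R : rat) u *m Vq = 0.
  apply/matrixP => a b; rewrite (ord1 a) [RHS]mxE.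
  have := intr_mulmx_entry u V b; rewrite Hu mxE rmorph0 => ->.
  by rewrite mxE; apply: eq_bigr => j _; rewrite !mxE.
move/eqP; rewrite mulmx_free_eq0 // => /eqP /matrixP H.
apply/matrixP => a b; have := H a b; rewrite !mxE => /eqP.
by rewrite intr_eq0 => /eqP.
Qed.

Lemma ZQ_M n d r (V : 'M[int]_(n, d)) (Cl : zmodType)
    (deg : {additive 'rV[int]_d -> Cl}) (D' : 'I_r.+1 -> 'rV[int]_d) (u0 : 'rV[int]_n) :
  (forall u, deg (u *m V) = 0) -> injective (fun i => deg (D' i)) ->
  (forall rho, 0 < (u0 *m V) 0 rho) -> forall u, ZQ V D' (0, u *m V).
Proof.
move=> HV Hinj Hu0 u.
have [w [Hw Hwu]] := pos_shift Hu0 (u *m V).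
have N1 := NQ_M HV Hinj Hw.
have N2 : NQ V D' (0, (w + u) *m V) by apply: (NQ_M HV Hinj); rewrite mulmxDl.
have := ZQ_sub (NQ_ZQ N2) (NQ_ZQ N1).
congr ZQ; congr pair; first by rewrite /= subrr.
by rewrite /= mulmxDl addrC addKr.
Qed.

Lemma ZQ_chi n d r (V : 'M[int]_(n, d)) (Cl : zmodType)
    (deg : {additive 'rV[int]_d -> Cl}) (D' : 'I_r.+1 -> 'rV[int]_d) (u0 : 'rV[int]_n) :
  (forall u, deg (u *m V) = 0) -> injective (fun i => deg (D' i)) ->
  (forall rho, 0 < (u0 *m V) 0 rho) -> forall i j,
  exists z, ZQ V D' z /\ z.1 = chi j - chi i.
Proof.
move=> HV Hinj Hu0 i j.
have [w [_ Hw]] := pos_shift Hu0 (D' j - D' i).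
by eexists; split; first exact: (NQ_ZQ (NQ_sec HV Hinj Hw)).
Qed.

Lemma chi_entry r (j l : 'I_r.+1) : (chi j) 0 l = (j == l)%:R.
Proof. by rewrite /chi mxE eqxx eq_sym. Qed.

Lemma ZQ_rank_lower n d r (V : 'M[int]_(n, d)) (Cl : zmodType)
    (deg : {additive 'rV[int]_d -> Cl}) (D' : 'I_r.+1 -> 'rV[int]_d) (u0 : 'rV[int]_n) :
  (forall u, deg (u *m V) = 0) -> injective (fun i => deg (D' i)) ->
  (forall rho, 0 < (u0 *m V) 0 rho) -> full_dim V ->
  exists f : 'I_(n + r) -> 'rV[int]_r.+1 * 'rV[int]_d, (forall k, ZQ V D' (f k)) /\ zindep f.
Proof.
move=> HV Hinj Hu0 fd.
have [F HF] := fin_all_exists (fun j : 'I_r => ZQ_chi HV Hinj Hu0 ord0 (lift ord0 j)).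
pose f := fun k : 'I_(n + r) => match split k with
  | inl p => ((0 : 'rV[int]_r.+1), delta_mx 0 p *m V) | inr j => F j end.
have fl : forall p, f (lshift r p) = (0, delta_mx 0 p *m V).
  by move=> p; rewrite /f (unsplitK (inl p : 'I_n + 'I_r)).
have fr : forall j, f (rshift n j) = F j.
  by move=> j; rewrite /f (unsplitK (inr j : 'I_n + 'I_r)).
exists f; split.
  move=> k; rewrite /f; case: (split k) => [p|j]; last by case: (HF j).
  exact: (ZQ_M HV Hinj Hu0).
move=> c Hc.
rewrite big_split_ord /= in Hc.
set A := \sum_(p < n) _ in Hc; set B := \sum_(j < r) _ in Hc.
have A1 : A.1 = 0.
  by rewrite /A fst_sum big1 // => p _; rewrite fl fst_mulrz /= mul0rz.
have cr : forall j, c (rshift n j) = 0.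
  move=> j0; have := congr1 (fun z : 'rV[int]_r.+1 * 'rV[int]_d => z.1 0 (lift ord0 j0)) Hc.
  rewrite /= A1 add0r mxE fst_sum mx_sum (bigD1 j0) //= big1 => [|j jj0].
    rewrite fr fst_mulrz mx_mulrz (HF j0).2 mxE [(- chi _) _ _]mxE !chi_entry eqxx.
    by rewrite (negbTE (neq_lift _ _)) /= subr0 addr0 mulrzz mul1r.
  rewrite fst_mulrz fr mx_mulrz (HF j).2 mxE [(- chi _) _ _]mxE !chi_entry (inj_eq (@lift_inj _ _)).
  by rewrite (negbTE jj0) (negbTE (neq_lift _ _)) subrr mul0rz.
have B0 : B = 0 by rewrite /B big1 // => j _; rewrite cr mulr0z.
rewrite B0 addr0 in Hc.
have cl : forall p, c (lshift r p) = 0.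
  move=> p0; have := congr1 snd Hc; rewrite /A snd_sum /=.
  under eq_bigr => p _ do rewrite fl snd_mulrz /=.
  rewrite -mulmx_sumz => /(mulV_inj fd) /matrixP /(_ 0 p0).
  rewrite mx_sum mxE (bigD1 p0) //= big1 => [|p pp0].
    by rewrite mx_mulrz mxE !eqxx mulrzz mul1r addr0.
  by rewrite mx_mulrz mxE eq_sym (negbTE pp0) andbF mul0rz.
move=> k; rewrite -(splitK k); case: (split k) => [p|j] /=.
  exact: cl.
exact: cr.
Qed.

Lemma ZQ_rank_upper n d r (V : 'M[int]_(n, d)) (D' : 'I_r.+1 -> 'rV[int]_d)
    (f : 'I_(n + r).+1 -> 'rV[int]_r.+1 * 'rV[int]_d) :
  (forall k, ZQ V D' (f k)) -> ~ zindep f.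
Proof.
move=> Hf Hind.
have [U HU] := fin_all_exists (fun k => (ZQ_inv (Hf k)).2).
pose g := fun k => row_mx (U k) (\row_(j < r) (f k).1 0 (lift ord0 j)).
have [c [[k0 ck0] Hc]] := int_dep g.
suff Z0 : \sum_k f k *~ c k = 0 by move: ck0; rewrite (Hind c Z0 k0) eqxx.
set Z := \sum_k f k *~ c k.
have HZ : ZQ V D' Z by apply: ZQ_sum => k; apply: ZQ_mulz.
have E1 : forall j : 'I_r, Z.1 0 (lift ord0 j) = 0.
  move=> j; have /matrixP /(_ 0 (rshift n j)) := Hc.
  rewrite mx_sum [RHS]mxE => E; rewrite /Z fst_sum mx_sum -[RHS]E.
  by apply: eq_bigr => k _; rewrite !mx_mulrz fst_mulrz mx_mulrz row_mxEr mxE.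
have EU : \sum_k U k *~ c k = 0.
  apply/matrixP => a p; rewrite (ord1 a); have /matrixP /(_ 0 (lshift r p)) := Hc.
  rewrite mx_sum [RHS]mxE => E; rewrite mx_sum [RHS]mxE -[RHS]E.
  by apply: eq_bigr => k _; rewrite !mx_mulrz row_mxEl.
have Z1 : Z.1 = 0.
  apply/matrixP => a b; rewrite (ord1 a) [RHS]mxE.
  case: (unliftP ord0 b) => [j ->|->]; first exact: E1.
  have := (ZQ_inv HZ).1; rewrite /wsum big_ord_recl big1 ?addr0 //.
have Z2 : Lmap D' Z = 0.
  rewrite /Z Lmap_sum.
  under eq_bigr => k _ do rewrite LmapZ HU.
  by rewrite -mulmx_sumz EU mul0mx.
move: Z2; rewrite /Lmap Z1 big1 => [|i _]; last by rewrite mxE mulr0z.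
rewrite subr0 => Z2.
by case: Z Z1 Z2 {HZ E1} => a b /= -> ->.
Qed.

Unset Implicit Arguments.

Theorem lemma2p8 (n d r : nat) (V : 'M[int]_(n, d))
    (Cl : zmodType) (deg : {additive 'rV[int]_d -> Cl})
    (D' : 'I_r.+1 -> 'rV[int]_d) :
  toric_fan_data V ->
  (* 0 -> M -> Z^d -> Cl(X) -> 0: Cl(X) is the cokernel of u |-> u *m V *)
  (forall D : 'rV[int]_d, deg D = 0 <-> exists u : 'rV[int]_n, D = u *m V) ->
  (forall c : Cl, exists D : 'rV[int]_d, deg D = c) ->
  (* E_0 = O_X, and the E_i are pairwise distinct *)
  deg (D' 0) = 0 ->
  injective (fun i => deg (D' i)) ->
  (* upper row: 0 -> M -> Z(Q) -> Wt(Q) -> 0 exact, M -> Z(Q) : u |-> (0, u V) *)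
  ((forall u : 'rV[int]_n, ZQ V D' (0, u *m V)) /\
   injective (fun u : 'rV[int]_n => ((0 : 'rV[int]_r.+1), u *m V)) /\
   (forall z, ZQ V D' z -> (z.1 = 0 <-> exists u : 'rV[int]_n, z = (0, u *m V))) /\
   (forall z, ZQ V D' z -> Wt z.1) /\
   (forall th, Wt th -> exists z, ZQ V D' z /\ z.1 = th)) /\
  (* pi_2 : ker(pi_1) -> image of M in Z^d is an isomorphism *)
  ((forall z, ZQ V D' z -> z.1 = 0 -> exists u : 'rV[int]_n, z.2 = u *m V) /\
   (forall z z', ZQ V D' z -> ZQ V D' z' -> z.1 = 0 -> z'.1 = 0 -> z.2 = z'.2 -> z = z') /\
   (forall u : 'rV[int]_n, exists z, [/\ ZQ V D' z, z.1 = 0 & z.2 = u *m V])) /\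
  (* the right square commutes: nu o pi_1 = deg o pi_2 on Z(Q) *)
  (forall z, ZQ V D' z -> nu deg D' z.1 = deg z.2) /\
  (* lower row exact *)
  (injective (fun u : 'rV[int]_n => u *m V) /\
   (forall u : 'rV[int]_n, deg (u *m V) = 0) /\
   (forall D, deg D = 0 -> exists u : 'rV[int]_n, D = u *m V) /\
   (forall c : Cl, exists D, deg D = c)) /\
  (* pi_2 identifies N(Q) cap ker(pi_1) with sigma^vee cap M = N^d cap ker(deg) *)
  ((forall z z', NQ V D' z -> NQ V D' z' -> z.1 = 0 -> z'.1 = 0 -> z.2 = z'.2 -> z = z') /\
   (forall D : 'rV[int]_d,
      ((exists z, [/\ NQ V D' z, z.1 = 0 & z.2 = D]) <->
       (exists u : 'rV[int]_n, (forall rho, 0 <= (u *m V) 0 rho) /\ D = u *m V)) /\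
      ((exists u : 'rV[int]_n, (forall rho, 0 <= (u *m V) 0 rho) /\ D = u *m V) <->
       ((forall rho, 0 <= D 0 rho) /\ deg D = 0)))) /\
  (* rank of Z(Q) is n + r *)
  has_rank (ZQ V D') (n + r).
Proof.
move=> [sc fd _ _ _] Hdeg Hsurj H0 Hinj.
have HV : forall u : 'rV[int]_n, deg (u *m V) = 0 by move=> u; apply/Hdeg; exists u.
have [u0 Hu0] := interior_pt sc.
have ZM := ZQ_M HV Hinj Hu0.
have Vinj : injective (fun u : 'rV[int]_n => u *m V).
  move=> u u' /= /eqP; rewrite -subr_eq0 -mulmxBl => /eqP /(mulV_inj fd) /eqP.
  by rewrite subr_eq0 => /eqP.
have ker1 : forall z, ZQ V D' z -> z.1 = 0 -> exists u, z = (0, u *m V).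
  move=> z Hz z1; have [_ [u Hu]] := ZQ_inv Hz; exists u.
  move: Hu; rewrite /Lmap z1 big1 => [|i _]; last by rewrite mxE mulr0z.
  by rewrite subr0; case: z z1 {Hz} => a b /= -> ->.
have pairE : forall z z' : 'rV[int]_r.+1 * 'rV[int]_d,
    z.1 = 0 -> z'.1 = 0 -> z.2 = z'.2 -> z = z'.
  by move=> [a b] [a' b'] /= -> -> ->.
split.
  split; first exact: ZM.
  split; first by move=> u u' /= [] /Vinj.
  split; first by move=> z Hz; split; [exact: ker1 | by move=> [u ->]].
  split; first by move=> z Hz; exact: (ZQ_inv Hz).1.
  move=> th Hth.
  have [F HF] := fin_all_exists (fun k => ZQ_chi HV Hinj Hu0 ord0 k).
  exists (\sum_k F k *~ th 0 k); split.
    by apply: ZQ_sum => k; apply: ZQ_mulz; case: (HF k).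
  rewrite fst_sum; apply/matrixP => a l; rewrite (ord1 a) mx_sum.
  transitivity (\sum_k ((k == l)%:R - (ord0 == l)%:R) * th 0 k).
    apply: eq_bigr => k _.
    by rewrite fst_mulrz mx_mulrz (HF k).2 mxE [(- chi _) _ _]mxE !chi_entry mulrzz.
  rewrite (eq_bigr (fun k => (k == l)%:R * th 0 k - (ord0 == l)%:R * th 0 k));
    last by move=> k _; rewrite mulrBl.
  rewrite sumrB -mulr_sumr Hth mulr0 subr0 (bigD1 l) //= eqxx mul1r big1 ?addr0 //.
  by move=> k kl; rewrite (negbTE kl) mul0r.
split.
  split; first by move=> z Hz z1; have [u ->] := ker1 z Hz z1; exists u.
  split; first by move=> z z' _ _; apply: pairE.
  by move=> u; exists (0, u *m V); split => //; exact: ZM.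
split.
  move=> z Hz; have [_ [u Hu]] := ZQ_inv Hz.
  have -> : z.2 = u *m V + \sum_i D' i *~ z.1 0 i by rewrite -Hu /Lmap subrK.
  rewrite raddfD HV add0r raddf_sum /nu; apply: eq_bigr => i _.
  by rewrite raddfMz.
split.
  split; first exact: Vinj.
  split; first exact: HV.
  split; last exact: Hsurj.
  by move=> D /Hdeg.
split.
  split; first by move=> z z' _ _; apply: pairE.
  move=> D; split.
    split.
      move=> [z [Hz z1 z2]]; have [u Ez] := ker1 z (NQ_ZQ Hz) z1.
      exists u; split; last by rewrite -z2 Ez.
      move=> rho; have -> : (u *m V) 0 rho = z.2 0 rho by rewrite Ez.
      case: Hz => s [_ ->]; rewrite snd_sum summxE sumr_ge0 // => a _.
      by rewrite /= mxE.
    move=> [u [Hu ->]]; exists (0, u *m V); split => //.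
    exact: (NQ_M HV Hinj Hu).
  split.
    by move=> [u [Hu ->]]; split => //; exact: HV.
  by move=> [Hpos /Hdeg [u Hu]]; exists u; split => //; rewrite -Hu.
split; first exact: (ZQ_rank_lower HV Hinj Hu0 fd).
by move=> f Hf; exact: ZQ_rank_upper.
Qed.
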